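(* For $n\in\mathbb{N}^\star$ let $\phi_n(x)=\int_0^\pi e^{-2x\sin\eta}e^{2in\eta}\,\mathrm{d}\eta$. Then for every $x>0$ and $n\ge1$, $$\frac12\,\frac{(2n+1)x}{(n^2+x^2)\big((n+1)^2+x^2\big)}\le\phi_n(x)-\phi_{n+1}(x)\le4\,\frac{(2n+1)x}{(n^2+x^2)\big((n+1)^2+x^2\big)}.$$ *)

(* Defs.v *)
From Stdlib Require Import Reals.
From Coquelicot Require Import Coquelicot.
Open Scope R_scope.

Definition expi (t : R) : C := (cos t, sin t).

Definition phi (n : nat) (x : R) : C :=
  RInt (V := C_R_CompleteNormedModule)
    (fun eta => RtoC (exp (-2 * x * sin eta)) * expi (2 * INR n * eta))%C 0 PI.

(* Main.v *)
Require Import Defs.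
From Stdlib Require Import Reals Lra Psatz.
From Coquelicot Require Import Coquelicot.
Open Scope R_scope.

Lemma cont_of_der (f : R -> R) x : ex_derive f x -> continuity_pt f x.
Proof. intro H. apply continuity_pt_filterlim.
  exact (ex_derive_continuous (K:=R_AbsRing) (V:=R_NormedModule) f x H). Qed.

Lemma ex_RInt_cont (f : R -> R) a b : (forall t, continuity_pt f t) -> ex_RInt f a b.
Proof. intros H. apply (ex_RInt_continuous (V:=R_CompleteNormedModule)).
  intros t _. apply continuity_pt_filterlim. apply H. Qed.

Definition CI (P : R -> R) (z : R) := RInt (fun t => exp (-(z * sin t)) * P t) 0 PI.

Lemma CI_ex P z : (forall t, continuity_pt P t) ->
  ex_RInt (fun t => exp (-(z * sin t)) * P t) 0 PI.
Proof.
  intros HP. apply ex_RInt_cont. intros t.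
  apply continuity_pt_mult; [|apply HP].
  apply cont_of_der. auto_derive. auto.
Qed.

Lemma CI_deriv P z : (forall t, continuity_pt P t) ->
  is_derive (CI P) z (CI (fun t => - sin t * P t) z).
Proof.
  intros HP. unfold CI.
  set (f := fun u t => exp (-(u * sin t)) * P t).
  assert (Hd : forall u t, is_derive (fun u => f u t) u (exp (-(u * sin t)) * (- sin t * P t))).
  { intros u t. unfold f. auto_derive. auto. ring. }
  assert (HD : forall u t, Derive (fun u => f u t) u = exp (-(u * sin t)) * (- sin t * P t)).
  { intros. apply is_derive_unique. apply Hd. }
  rewrite (RInt_ext (fun t => exp (-(z * sin t)) * (- sin t * P t)) (fun t => Derive (fun u => f u t) z)).
  2:{ intros. now rewrite HD. }
  apply (is_derive_RInt_param f 0 PI z).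
  - apply filter_forall. intros u t _. eexists. apply Hd.
  - intros t _. apply continuity_2d_pt_ext with (f := fun u v => exp (-(u * sin v)) * (- sin v * P v)).
    { intros. now rewrite HD. }
    apply continuity_2d_pt_mult.
    + apply continuity_1d_2d_pt_comp with (f := exp) (g := fun u v => - (u * sin v)).
      * apply cont_of_der. auto_derive. auto.
      * apply continuity_2d_pt_opp. apply continuity_2d_pt_mult. apply continuity_2d_pt_id1.
        apply continuity_1d_2d_pt_comp with (f := sin) (g := fun u v => v).
        apply cont_of_der. auto_derive. auto. apply continuity_2d_pt_id2.
    + apply continuity_2d_pt_mult.
      apply continuity_2d_pt_opp.
      apply continuity_1d_2d_pt_comp with (f := sin) (g := fun u v => v).
      apply cont_of_der. auto_derive. auto. apply continuity_2d_pt_id2.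
      apply continuity_1d_2d_pt_comp with (f := P) (g := fun u v => v).
      apply HP. apply continuity_2d_pt_id2.
  - apply filter_forall. intros y. apply CI_ex. exact HP.
Qed.

Definition P0 k := fun t => cos (k * t).
Definition P1 k := fun t => - sin t * P0 k t.
Definition P2 k := fun t => - sin t * P1 k t.

Lemma P0c k t : continuity_pt (P0 k) t.
Proof. apply cont_of_der. unfold P0. auto_derive. auto. Qed.
Lemma P1c k t : continuity_pt (P1 k) t.
Proof. apply cont_of_der. unfold P1, P0. auto_derive. auto. Qed.
Lemma P2c k t : continuity_pt (P2 k) t.
Proof. apply cont_of_der. unfold P2, P1, P0. auto_derive. auto. Qed.

Lemma aux_comb (E c s ck z K : R) : c*c + s*s = 1 ->
  E*((z^2*c^2 + z*s + K)*ck) = (z^2+K)*(E*ck) - z^2*(E*(-s*(-s*ck))) - z*(E*(-s*ck)).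
Proof. intro H. replace (c^2) with (1 - s*s) by nra. ring. Qed.

Lemma ode k z : cos (k * PI) = 1 -> sin (k * PI) = 0 ->
  z^2 * CI (P2 k) z + z * CI (P1 k) z - (z^2 + k^2) * CI (P0 k) z = -2 * z.
Proof.
  intros Hc Hs.
  set (G := fun t => -z * cos t * exp (-(z * sin t)) * cos (k * t) + k * exp (-(z * sin t)) * sin (k * t)).
  set (g := fun t => exp (-(z * sin t)) * ((z^2 * cos t ^ 2 + z * sin t + k^2) * cos (k * t))).
  assert (HI : is_RInt g 0 PI (minus (G PI) (G 0))).
  { apply (is_RInt_derive (V:=R_CompleteNormedModule)).
    - intros t _. unfold G, g. auto_derive. auto. ring.
    - intros t _. apply continuity_pt_filterlim. apply cont_of_der. unfold g. auto_derive. auto. }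
  assert (HV : minus (G PI) (G 0) = 2 * z).
  { unfold minus, plus, opp; simpl. unfold G. rewrite Hc, Hs, cos_PI, sin_PI, cos_0, sin_0.
    rewrite !Rmult_0_r, Ropp_0, exp_0, cos_0, sin_0. cbv beta. lra. }
  rewrite HV in HI.
  assert (HE : forall t, g t = (z^2+k^2) * (exp (-(z * sin t)) * P0 k t)
      - z^2 * (exp (-(z * sin t)) * P2 k t) - z * (exp (-(z * sin t)) * P1 k t)).
  { intros t. unfold g, P2, P1, P0. apply aux_comb. pose proof (sin2_cos2 t). unfold Rsqr in *. lra. }
  assert (HI2 : is_RInt (fun t => (z^2+k^2) * (exp (-(z * sin t)) * P0 k t)
      - z^2 * (exp (-(z * sin t)) * P2 k t) - z * (exp (-(z * sin t)) * P1 k t)) 0 PI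
      ((z^2+k^2) * CI (P0 k) z - z^2 * CI (P2 k) z - z * CI (P1 k) z)).
  { apply (is_RInt_minus (V:=R_NormedModule)). apply (is_RInt_minus (V:=R_NormedModule)).
    - apply (is_RInt_scal (V:=R_NormedModule)). apply (RInt_correct (V:=R_CompleteNormedModule)). apply CI_ex. apply P0c.
    - apply (is_RInt_scal (V:=R_NormedModule)). apply (RInt_correct (V:=R_CompleteNormedModule)). apply CI_ex. apply P2c.
    - apply (is_RInt_scal (V:=R_NormedModule)). apply (RInt_correct (V:=R_CompleteNormedModule)). apply CI_ex. apply P1c. }
  apply (is_RInt_ext _ g) in HI2. 2:{ intros. now rewrite HE. }
  pose proof (is_RInt_unique _ _ _ _ HI) as U1.
  pose proof (is_RInt_unique _ _ _ _ HI2) as U2.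
  rewrite U1 in U2. lra.
Qed.

Lemma maxprin K (v v1 v2 : R -> R) R0 : 0 < K -> 0 < R0 ->
  (forall z, is_derive v z (v1 z)) -> (forall z, is_derive v1 z (v2 z)) ->
  (forall z, 0 < z -> z^2 * v2 z + z * v1 z - (z^2 + K) * v z >= 0) ->
  v 0 < 0 -> v R0 < 0 -> forall z, 0 <= z <= R0 -> v z <= 0.
Proof.
  intros HK HR Hd1 Hd2 HL H0 HR0.
  assert (Hdp : forall z, derivable_pt v z).
  { intro z. exists (v1 z). apply is_derive_Reals. apply Hd1. }
  destruct (continuity_ab_maj v 0 R0) as [c [Hmax Hc]]. lra.
  { intros y _. apply derivable_continuous_pt. apply Hdp. }
  intros z Hz.
  destruct (Rle_or_lt (v c) 0) as [Hneg|Hpos]. { specialize (Hmax z Hz). lra. }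
  exfalso.
  assert (Hc0 : 0 < c). { destruct (Req_dec c 0) as [E|E]. subst. lra. lra. }
  assert (Hc1 : c < R0). { destruct (Req_dec c R0) as [E|E]. subst. lra. lra. }
  assert (Hv1 : v1 c = 0).
  { pose proof (deriv_maximum v 0 R0 c (Hdp c) Hc0 Hc1) as D.
    assert (derive_pt v c (Hdp c) = v1 c).
    { apply derive_pt_eq_0. apply is_derive_Reals. apply Hd1. }
    rewrite <- H. apply D. intros. apply Hmax. lra. }
  assert (Hv2 : v2 c > 0).
  { specialize (HL c Hc0). rewrite Hv1 in HL.
    assert (0 < (c^2 + K) * v c) by (apply Rmult_lt_0_compat; nra).
    assert (0 < c^2) by nra. nra. }
  pose proof (proj1 (is_derive_Reals _ _ _) (Hd2 c)) as Hl.
  destruct (Hl (v2 c) Hv2) as [del Hdel].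
  set (h := Rmin (del/2) ((R0 - c)/2)).
  assert (Hh : 0 < h). { unfold h. apply Rmin_pos. destruct del; simpl; lra. lra. }
  assert (Hh1 : h < del). { unfold h. eapply Rle_lt_trans. apply Rmin_l. destruct del; simpl; lra. }
  assert (Hh2 : h < R0 - c). { unfold h. eapply Rle_lt_trans. apply Rmin_r. lra. }
  destruct (MVT_cor2 v v1 c (c + h)) as [xi [Hxi Hxir]]. lra.
  { intros. apply is_derive_Reals. apply Hd1. }
  assert (Hpos1 : v1 xi > 0).
  { specialize (Hdel (xi - c)). replace (c + (xi - c)) with xi in Hdel by ring.
    rewrite Hv1 in Hdel.
    assert (xi - c <> 0) by lra.
    assert (Rabs (xi - c) < del) by (rewrite Rabs_right; lra).
    specialize (Hdel H H1).
    assert (Hq : (v1 xi - 0) / (xi - c) > 0).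
    { apply Rabs_def2 in Hdel. lra. }
    replace (v1 xi - 0) with (v1 xi) in Hq by ring.
    destruct (Rle_or_lt (v1 xi) 0) as [Hn|Hp]; auto.
    exfalso. assert (v1 xi / (xi - c) <= 0).
    { unfold Rdiv. apply Rmult_le_0_r. lra. left. apply Rinv_0_lt_compat. lra. }
    lra. }
  assert (v (c + h) <= v c) by (apply Hmax; lra).
  nra.
Qed.

Lemma comparison K M (a a1 a2 : R -> R) : 1 <= K -> 0 <= M ->
  (forall z, is_derive a z (a1 z)) -> (forall z, is_derive a1 z (a2 z)) ->
  (forall z, 0 < z -> z^2 * a2 z + z * a1 z - (z^2 + K) * a z >= 0) ->
  a 0 <= 0 -> (forall z, 0 <= z -> a z <= M) ->
  forall z, 0 <= z -> a z <= 0.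
Proof.
  intros HK HM Hd1 Hd2 HL H0 HB z Hz.
  destruct (Rle_or_lt (a z) 0) as [H|H]; auto. exfalso.
  set (eps := a z / (2 * (1 + z))).
  assert (Heps : 0 < eps). { unfold eps. apply Rdiv_lt_0_compat; lra. }
  set (R0 := z + (M + 1) / eps).
  assert (HR0 : z < R0). { unfold R0. assert (0 < (M+1)/eps) by (apply Rdiv_lt_0_compat; lra). lra. }
  assert (Hmp := maxprin K (fun y => a y - eps * (1 + y)) (fun y => a1 y - eps) a2 R0).
  assert (Hz2 : a z - eps * (1 + z) <= 0).
  { apply Hmp; try lra.
    - intro y. assert (D : is_derive (fun y => eps * (1 + y)) y eps) by (auto_derive; auto; ring).
      exact (is_derive_minus a _ y (a1 y) eps (Hd1 y) D).
    - intro y. replace (a2 y) with (a2 y - 0) by (rewrite Rminus_0_r; reflexivity).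
      exact (is_derive_minus a1 (fun _ => eps) y (a2 y) 0 (Hd2 y) (is_derive_const eps y)).
    - intros y Hy. specialize (HL y Hy). cbv beta.
      assert (0 <= (y^2+K)*(1+y) - y) by nra.
      assert (0 <= eps * ((y^2+K)*(1+y) - y)) by (apply Rmult_le_pos; lra).
      nra.
    - cbv beta. specialize (HB R0 ltac:(lra)).
      assert (eps * (1 + R0) > M).
      { unfold R0. replace (eps * (1 + (z + (M + 1) / eps))) with (eps * (1 + z) + (M+1))
          by (field; lra). nra. }
      lra. }
  assert (eps * (1 + z) = a z / 2). { unfold eps. field. lra. }
  lra.
Qed.

Lemma poly_up (u K : R) : 0 <= u -> 4 <= K -> 2*(u^2-6*u*K+K^2)*(u+K) + 3*(9*u^2-14*u*K+K^2-(u+K)^3) <= 0.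
Proof. intros. assert (0 <= u*u*(K-4)) by (apply Rmult_le_pos; nra). assert (0<= K*K*(K-4)) by (apply Rmult_le_pos; nra). nra. Qed.
Lemma poly_lo (u K : R) : 0 <= u -> 4 <= K -> 2*(u^2-6*u*K+K^2)*(u+K) - 2*(9*u^2-14*u*K+K^2-(u+K)^3) >= 0.
Proof. intros. assert (Hs : 0 <= (u-K)^2) by (apply pow2_ge_0).
  destruct (Rle_or_lt 5 (u+K)).
  - assert (0 <= (u-K)^2*(u+K-5)) by (apply Rmult_le_pos; lra). nra.
  - nra. Qed.

Definition B K c z := 2*z/(z^2+K) + c*z/(z^2+K)^2.
Definition B1 K c z := 2/(z^2+K) - 4*z^2/(z^2+K)^2 + c*(1/(z^2+K)^2 - 4*z^2/(z^2+K)^3).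
Definition B2 K c z := -12*z/(z^2+K)^2 + 16*z^3/(z^2+K)^3 + c*(-12*z/(z^2+K)^3 + 24*z^3/(z^2+K)^4).

Lemma qpos K z : 0 < K -> 0 < z^2 + K.
Proof. intros; nra. Qed.

Lemma B_d1 K c z : 0 < K -> is_derive (B K c) z (B1 K c z).
Proof. intros HK. pose proof (qpos K z HK). unfold B, B1. auto_derive.
  - repeat split; repeat apply Rmult_integral_contrapositive_currified; apply Rgt_not_eq; nra.
  - field. lra. Qed.

Lemma B_d2 K c z : 0 < K -> is_derive (B1 K c) z (B2 K c z).
Proof. intros HK. pose proof (qpos K z HK). unfold B1, B2. auto_derive.
  - repeat split; repeat apply Rmult_integral_contrapositive_currified; apply Rgt_not_eq; nra.
  - field. lra. Qed.

Lemma B_L K c z : 0 < K ->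
  z^2 * B2 K c z + z * B1 K c z - (z^2+K) * B K c z + 2*z =
  z/(z^2+K)^4 * (2*((z^2)^2 - 6*z^2*K + K^2)*(z^2+K) + c*(9*(z^2)^2 - 14*z^2*K + K^2 - (z^2+K)^3)).
Proof. intros HK. pose proof (qpos K z HK). unfold B, B1, B2. field. lra. Qed.

Lemma c0_zero k : k <> 0 -> sin (k*PI) = 0 -> CI (P0 k) 0 = 0.
Proof.
  intros Hk Hs. unfold CI, P0.
  rewrite (RInt_ext _ (fun t => cos (k * t))).
  2:{ intros x _. rewrite Rmult_0_l, Ropp_0, exp_0. apply Rmult_1_l. }
  assert (H : is_RInt (fun t => cos (k * t)) 0 PI (minus (sin (k * PI) / k) (sin (k * 0) / k))).
  { apply (is_RInt_derive (V:=R_CompleteNormedModule) (fun t => sin (k * t) / k)).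
    - intros t _. auto_derive. auto. field. auto.
    - intros t _. apply continuity_pt_filterlim. apply cont_of_der. auto_derive. auto. }
  rewrite (is_RInt_unique (V:=R_CompleteNormedModule) _ _ _ _ H). unfold minus, plus, opp; simpl.
  rewrite Hs, Rmult_0_r, sin_0. cbv beta. unfold Rdiv. rewrite Rmult_0_l. lra.
Qed.

Lemma c0_bound k z : 0 <= z -> Rabs (CI (P0 k) z) <= PI.
Proof.
  intros Hz. unfold CI.
  apply Rle_trans with ((PI - 0) * 1); [| lra].
  apply abs_RInt_le_const.
  - pose proof PI_RGT_0. lra.
  - apply CI_ex. apply P0c.
  - intros t Ht. rewrite Rabs_mult. unfold P0.
    assert (0 <= sin t) by (apply sin_ge_0; lra).
    assert (He : exp (-(z * sin t)) <= 1).
    { rewrite <- exp_0. destruct (Req_dec (z * sin t) 0) as [E|E].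
      - rewrite E, Ropp_0. lra.
      - left. apply exp_increasing. assert (0 <= z * sin t) by (apply Rmult_le_pos; lra). lra. }
    rewrite (Rabs_right (exp _)) by (left; apply exp_pos).
    assert (Rabs (cos (k * t)) <= 1) by (pose proof (COS_bound (k*t)); apply Rabs_le; lra).
    assert (0 <= Rabs (cos (k*t))) by apply Rabs_pos.
    assert (0 < exp (-(z * sin t))) by apply exp_pos.
    nra.
Qed.

Lemma frac_nonneg a b : 0 <= a -> 0 < b -> 0 <= a / b.
Proof. intros. unfold Rdiv. apply Rmult_le_pos; auto. left. apply Rinv_0_lt_compat; auto. Qed.

Lemma c0_upper k z : cos (k*PI) = 1 -> sin (k*PI) = 0 -> 4 <= k^2 -> 0 <= z ->
  CI (P0 k) z <= B (k^2) 3 z.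
Proof.
  intros Hc Hs Hk Hz.
  assert (HK : 0 < k^2) by lra.
  assert (Hk0 : k <> 0) by (intro E; subst; simpl in Hk; lra).
  cut (CI (P0 k) z - B (k^2) 3 z <= 0). lra.
  apply (comparison (k^2) PI (fun z => CI (P0 k) z - B (k^2) 3 z)
     (fun z => CI (P1 k) z - B1 (k^2) 3 z) (fun z => CI (P2 k) z - B2 (k^2) 3 z)); auto.
  - lra.
  - left; apply PI_RGT_0.
  - intro y. exact (is_derive_minus _ _ y _ _ (CI_deriv (P0 k) y (P0c k)) (B_d1 _ 3 y HK)).
  - intro y. exact (is_derive_minus _ _ y _ _ (CI_deriv (P1 k) y (P1c k)) (B_d2 _ 3 y HK)).
  - intros y Hy.
    pose proof (ode k y Hc Hs) as O. pose proof (B_L (k^2) 3 y HK) as L.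
    pose proof (poly_up (y^2) (k^2) ltac:(nra) Hk) as Pu.
    assert (0 <= y / (y^2 + k^2)^4) by (apply frac_nonneg; [lra| apply pow_lt; nra]).
    set (Q := y / (y^2 + k^2)^4) in *.
    set (W := 2 * ((y ^ 2) ^ 2 - 6 * y ^ 2 * k ^ 2 + (k ^ 2) ^ 2) * (y ^ 2 + k ^ 2) +
       3 * (9 * (y ^ 2) ^ 2 - 14 * y ^ 2 * k ^ 2 + (k ^ 2) ^ 2 - (y ^ 2 + k ^ 2) ^ 3)) in *.
    assert (Q * W <= 0) by (apply Rmult_le_0_l; lra ).
    nra.
  - rewrite c0_zero; auto. unfold B. unfold Rdiv. rewrite !Rmult_0_r, Rmult_0_l. lra.
  - intros y Hy. pose proof (c0_bound k y Hy) as Hb. apply Rabs_le_between in Hb.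
    assert (0 <= B (k^2) 3 y).
    { unfold B. apply Rplus_le_le_0_compat; apply frac_nonneg; try nra; apply pow_lt; nra. }
    lra.
Qed.

Lemma c0_lower k z : cos (k*PI) = 1 -> sin (k*PI) = 0 -> 4 <= k^2 -> 0 <= z ->
  B (k^2) (-2) z <= CI (P0 k) z.
Proof.
  intros Hc Hs Hk Hz.
  assert (HK : 0 < k^2) by lra.
  assert (Hk0 : k <> 0) by (intro E; subst; simpl in Hk; lra).
  cut (B (k^2) (-2) z - CI (P0 k) z <= 0). lra.
  apply (comparison (k^2) (1 + PI) (fun z => B (k^2) (-2) z - CI (P0 k) z)
     (fun z => B1 (k^2) (-2) z - CI (P1 k) z) (fun z => B2 (k^2) (-2) z - CI (P2 k) z)); auto.
  - lra.
  - pose proof PI_RGT_0. lra.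
  - intro y. exact (is_derive_minus _ _ y _ _ (B_d1 _ (-2) y HK) (CI_deriv (P0 k) y (P0c k))).
  - intro y. exact (is_derive_minus _ _ y _ _ (B_d2 _ (-2) y HK) (CI_deriv (P1 k) y (P1c k))).
  - intros y Hy.
    pose proof (ode k y Hc Hs) as O. pose proof (B_L (k^2) (-2) y HK) as L.
    pose proof (poly_lo (y^2) (k^2) ltac:(nra) Hk) as Pu.
    assert (0 <= y / (y^2 + k^2)^4) by (apply frac_nonneg; [lra| apply pow_lt; nra]).
    set (Q := y / (y^2 + k^2)^4) in *.
    set (W := 2 * ((y ^ 2) ^ 2 - 6 * y ^ 2 * k ^ 2 + (k ^ 2) ^ 2) * (y ^ 2 + k ^ 2) +
       (-2) * (9 * (y ^ 2) ^ 2 - 14 * y ^ 2 * k ^ 2 + (k ^ 2) ^ 2 - (y ^ 2 + k ^ 2) ^ 3)) in *.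
    assert (0 <= W) by (unfold W; lra).
    assert (0 <= Q * W) by (apply Rmult_le_pos; lra ).
    nra.
  - rewrite c0_zero; auto. unfold B. unfold Rdiv. rewrite !Rmult_0_r, Rmult_0_l. lra.
  - intros y Hy. pose proof (c0_bound k y Hy) as Hb. apply Rabs_le_between in Hb.
    assert (B (k^2) (-2) y <= 1).
    { unfold B. assert (0 < y^2 + k^2) by nra.
      assert (2 * y / (y^2 + k^2) <= 1).
      { apply Rmult_le_reg_r with (y^2+k^2); auto. unfold Rdiv. rewrite Rmult_assoc, Rinv_l by lra. nra. }
      assert (0 <= y / (y^2+k^2)^2) by (apply frac_nonneg; auto; apply pow_lt; nra).
      unfold Rdiv in *. nra. }
    lra.
Qed.

Lemma antisym (f : R -> R) : (forall t, f (PI - t) = - f t) -> (forall t, continuity_pt f t) ->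
  RInt f 0 PI = 0.
Proof.
  intros Hf Hc.
  assert (H := RInt_comp_lin (V:=R_CompleteNormedModule) f (-1) PI 0 PI).
  replace (-1 * 0 + PI) with PI in H by ring.
  replace (-1 * PI + PI) with 0 in H by ring.
  rewrite (RInt_ext _ f) in H.
  2:{ intros x _. unfold scal; simpl. unfold mult; simpl.
      replace (-1 * x + PI) with (PI - x) by ring. rewrite Hf. ring. }
  assert (H2 := opp_RInt_swap (V:=R_CompleteNormedModule) f 0 PI (ex_RInt_cont f 0 PI Hc)).
  rewrite <- H2 in H. unfold opp in H; simpl in H. specialize (H (ex_RInt_cont f PI 0 Hc)). lra.
Qed.

Lemma cos_even_int j : cos (2 * INR j * PI) = 1.
Proof. rewrite <- (Rplus_0_l (2 * INR j * PI)), cos_period. apply cos_0. Qed.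
Lemma sin_even_int j : sin (2 * INR j * PI) = 0.
Proof. rewrite <- (Rplus_0_l (2 * INR j * PI)), sin_period. apply sin_0. Qed.

Lemma phi_eq n x : phi n x = RtoC (CI (P0 (2 * INR n)) (2 * x)).
Proof.
  unfold phi.
  set (fr := fun t => exp (-2 * x * sin t) * cos (2 * INR n * t)).
  set (fi := fun t => exp (-2 * x * sin t) * sin (2 * INR n * t)).
  assert (Hr : ex_RInt fr 0 PI).
  { apply ex_RInt_cont. intro t. apply cont_of_der. unfold fr. auto_derive. auto. }
  assert (Hi : ex_RInt fi 0 PI).
  { apply ex_RInt_cont. intro t. apply cont_of_der. unfold fi. auto_derive. auto. }
  assert (HI : is_RInt (V:=C_R_NormedModule)
     (fun eta => (RtoC (exp (-2 * x * sin eta)) * expi (2 * INR n * eta))%C) 0 PI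
     (RInt fr 0 PI, RInt fi 0 PI)).
  { apply (is_RInt_ext (V:=C_R_NormedModule) (fun t => (fr t, fi t))).
    { intros t _. unfold fr, fi, expi, RtoC, Cmult; simpl. f_equal; ring. }
    apply (is_RInt_fct_extend_pair (U:=R_NormedModule) (V:=R_NormedModule) (fun t => (fr t, fi t))).
    - apply (RInt_correct (V:=R_CompleteNormedModule)). exact Hr.
    - apply (RInt_correct (V:=R_CompleteNormedModule)). exact Hi. }
  rewrite (is_RInt_unique (V:=C_R_CompleteNormedModule) _ _ _ _ HI).
  unfold RtoC. f_equal.
  - unfold CI, P0, fr. apply RInt_ext. intros t _. f_equal. f_equal. ring.
  - apply antisym.
    + intro t. unfold fi. rewrite sin_PI_x.
      replace (2 * INR n * (PI - t)) with (- (2 * INR n * t) + 2 * INR n * PI) by ring.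
      rewrite sin_period, sin_neg. ring.
    + intro t. apply cont_of_der. unfold fi. auto_derive. auto.
Qed.

Lemma B_simpl N x c : 0 < N^2 + x^2 ->
  B ((2 * N)^2) c (2 * x) = x / (N^2 + x^2) + c * x / (8 * (N^2 + x^2)^2).
Proof. intros H. unfold B. field. lra. Qed.

Lemma ck_bounds j z : (1 <= j)%nat -> 0 <= z ->
  B ((2 * INR j)^2) (-2) z <= CI (P0 (2 * INR j)) z <= B ((2 * INR j)^2) 3 z.
Proof.
  intros Hj Hz.
  assert (1 <= INR j) by (replace 1 with (INR 1) by reflexivity; apply le_INR; auto).
  assert (4 <= (2 * INR j)^2) by nra.
  split.
  - apply c0_lower; auto. apply cos_even_int. apply sin_even_int.
  - apply c0_upper; auto. apply cos_even_int. apply sin_even_int.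
Qed.

Theorem proposition3p7 (n : nat) (x : R) (hn : (1 <= n)%nat) (hx : 0 < x) :
  exists d : R,
    (phi n x - phi (S n) x)%C = RtoC d /\
    / 2 * ((2 * INR n + 1) * x / ((INR n ^ 2 + x ^ 2) * ((INR n + 1) ^ 2 + x ^ 2))) <= d /\
    d <= 4 * ((2 * INR n + 1) * x / ((INR n ^ 2 + x ^ 2) * ((INR n + 1) ^ 2 + x ^ 2))).
Proof.
  exists (CI (P0 (2 * INR n)) (2 * x) - CI (P0 (2 * INR (S n))) (2 * x)).
  split.
  { rewrite !phi_eq. unfold Cminus, Cplus, Copp, RtoC; simpl. f_equal; ring. }
  destruct (ck_bounds n (2 * x) hn ltac:(lra)) as [La Ua].
  destruct (ck_bounds (S n) (2 * x) ltac:(lia) ltac:(lra)) as [Lb Ub].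
  rewrite S_INR in Lb, Ub. rewrite S_INR.
  set (N := INR n) in *.
  assert (HN : 1 <= N) by (unfold N; replace 1 with (INR 1) by reflexivity; apply le_INR; auto).
  assert (pa : 0 < N^2 + x^2) by nra.
  assert (pb : 0 < (N+1)^2 + x^2) by nra.
  rewrite !B_simpl in La, Ua by auto.
  rewrite !B_simpl in Lb, Ub by auto.
  set (a := N^2 + x^2) in *. set (b := (N+1)^2 + x^2) in *.
  assert (Hab : b = a + (2*N+1)) by (unfold a, b; ring).
  assert (Hb4 : b <= 4 * a) by (unfold a, b; nra).
  assert (Hab2 : a <= b) by lra.
  set (CA := CI (P0 (2 * N)) (2 * x)) in *.
  set (CB := CI (P0 (2 * (N + 1))) (2 * x)) in *.
  assert (T : (2 * N + 1) * x / (a * b) = x / a - x / b) by (rewrite Hab; field; lra).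
  rewrite T.
  split.
  -
    assert (E : (x / a + -2 * x / (8 * a^2)) - (x / b + 3 * x / (8 * b^2)) - / 2 * (x / a - x / b)
       = x * (4 * (2*N+1) * a * b - 2 * b^2 - 3 * a^2) / (8 * a^2 * b^2)).
    { rewrite Hab. field. lra. }
    assert (0 <= x * (4 * (2*N+1) * a * b - 2 * b^2 - 3 * a^2) / (8 * a^2 * b^2)).
    { apply frac_nonneg; [| apply Rmult_lt_0_compat; [apply Rmult_lt_0_compat|]; [lra | apply pow_lt; lra | apply pow_lt; lra]]. apply Rmult_le_pos; [lra|].
      assert (0 <= a * b) by nra. nra. }
    lra.
  - assert (E : 4 * (x / a - x / b) - ((x / a + 3 * x / (8 * a^2)) - (x / b + -2 * x / (8 * b^2)))
       = x * (24 * (2*N+1) * a * b - 3 * b^2 - 2 * a^2) / (8 * a^2 * b^2)).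
    { rewrite Hab. field. lra. }
    assert (0 <= x * (24 * (2*N+1) * a * b - 3 * b^2 - 2 * a^2) / (8 * a^2 * b^2)).
    { apply frac_nonneg; [| apply Rmult_lt_0_compat; [apply Rmult_lt_0_compat|]; [lra | apply pow_lt; lra | apply pow_lt; lra]]. apply Rmult_le_pos; [lra|].
      assert (0 <= a * b) by nra. nra. }
    lra.
Qed.
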